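(* Let $\alpha\in\mathbb{N}$. For every $r^{(0)}(n),r^{(1)}(n),r^{(2)}(n)\in\mathbb{C}[n]$ there exists $\bar B\in\mathfrak{D}$ such that for all $n\in\mathbb{N}_0$ $$r^{(0)}(n)\int_{-1}^{n}\big[r^{(1)}(s)L^\alpha_s(x)+r^{(2)}(s)L^\alpha_{s-1}(x)\big]\,d\mu_{\mathrm{d}}(s)=\bar B\,L^\alpha_n(x).$$
   Context: Laguerre polynomials: $L^\alpha_n(x)=\frac{\Gamma(\alpha+n+1)}{\Gamma(\alpha+1)\Gamma(n+1)}\,{}_1F_1(-n;\alpha+1;x)$ for $n\in\mathbb{N}_0$, with ${}_1F_1(a;c;x)=\sum_{j\ge0}\frac{(a)_jx^j}{(c)_jj!}$, and $L^\alpha_{-j}(x)=0$ for $j\in\mathbb{N}$. Discrete integral: $\int_m^n f(s)\,d\mu_{\mathrm{d}}(s)=\sum_{s=m+1}^n f(s)$ if $n>m$ (and $0$ if $n=m$). $\mathfrak{D}$ is the associative algebra of differential operators generated by $\frac{d}{dx}$ and $x\frac{d^2}{dx^2}-x\frac{d}{dx}$. *)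

(* Defs.v *)
From HB Require Import structures.
From mathcomp Require Import all_boot all_order all_algebra all_field.
Set Implicit Arguments. Unset Strict Implicit. Unset Printing Implicit Defensive.
Import Order.TTheory GRing.Theory Num.Theory.
Local Open Scope ring_scope.

Definition poch (a : algC) (j : nat) : algC := \prod_(i < j) (a + i%:R).

(* Laguerre polynomial L^alpha_n(x) for n in N_0, alpha in N, as a polynomial in x:
   Gamma(alpha+n+1)/(Gamma(alpha+1) Gamma(n+1)) * 1F1(-n; alpha+1; x).
   With alpha, n natural, Gamma(k+1) = k!.  The hypergeometric series
   terminates: (-n)_j = 0 for j > n, so summing over j <= n is exact. *)
Definition laguerre (alpha n : nat) : {poly algC} :=
  (((alpha + n)`!)%:R / ((alpha`!)%:R * (n`!)%:R)) *:
  \sum_(j < n.+1) (poch (- n%:R) j / (poch (alpha%:R + 1) j * (j`!)%:R)) *: 'X^j.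

Definition laguerreZ (alpha : nat) (s : int) : {poly algC} :=
  match s with
  | Posz n => laguerre alpha n
  | Negz _ => 0
  end.

(* Discrete integral: \int_m^n f d mu_d = sum_{s=m+1}^n f(s) if n > m, 0 if n = m. *)
Definition dint (m n : int) (f : int -> {poly algC}) : {poly algC} :=
  if m < n then \sum_(k < `|n - m|%N) f (m + (k.+1)%:Z) else 0.

Definition dx_op (p : {poly algC}) : {poly algC} := p^`().
Definition lag_op (p : {poly algC}) : {poly algC} := 'X * p^`(2) - 'X * p^`().

(* D = the (unital) associative algebra of operators generated by d/dx and
   x d^2/dx^2 - x d/dx: the smallest set of operators containing the scalar
   multiples of the identity and the two generators, closed under sums,
   scalar multiples and composition. *)
Inductive inD : ({poly algC} -> {poly algC}) -> Prop :=
  | inD_scal (c : algC) : inD (fun p => c *: p)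
  | inD_dx : inD dx_op
  | inD_lag : inD lag_op
  | inD_add (A B : {poly algC} -> {poly algC}) :
      inD A -> inD B -> inD (fun p => A p + B p)
  | inD_scale (c : algC) (A : {poly algC} -> {poly algC}) :
      inD A -> inD (fun p => c *: A p)
  | inD_comp (A B : {poly algC} -> {poly algC}) :
      inD A -> inD B -> inD (fun p => A (B p)).

(* Main.v *)
Require Import Defs.
From HB Require Import structures.
From mathcomp Require Import all_boot all_order all_algebra all_field.
From mathcomp Require Import ring zify.
Import Order.TTheory GRing.Theory Num.Theory.
Local Open Scope ring_scope.

Section L.
Variable alpha : nat.

Definition cc (n j : nat) : algC := (-1) ^+ j * ('C(alpha + n, alpha + j))%:R / (j`!)%:R.

Lemma fact_neq0 (j : nat) : (j`!)%:R != 0 :> algC.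
Proof. by rewrite pnatr_eq0 -lt0n fact_gt0. Qed.

Lemma cc_rec n j :
  cc n j.+1 * ((alpha + j.+1) * j.+1)%:R = cc n j * (j%:R - n%:R).
Proof.
rewrite /cc.
have H := mul_bin_left (alpha + n) (alpha + j).
rewrite addnS factS natrM.
have Hj : (j.+1)%:R != 0 :> algC by rewrite pnatr_eq0.
have Hf := fact_neq0 j.
have E : ('C(alpha + n, (alpha + j).+1))%:R * (alpha + j.+1)%:R
   = (n%:R - j%:R) * ('C(alpha + n, alpha + j))%:R :> algC.
  rewrite addnS -natrM mulnC H natrM.
  case: (leqP j n) => hjn.
    by rewrite subnDl natrB.
  by rewrite (bin_small (n:=alpha+n) (m:=alpha+j)) ?ltn_add2l // !mulr0.
rewrite natrM.
set C1 := ('C(_, _.+1))%:R in E *.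
set C0 := ('C(_, alpha + j))%:R in E *.
have Ha : (alpha + j.+1)%:R != 0 :> algC by rewrite pnatr_eq0 addnS.
have C1E : C1 = (n%:R - j%:R) * C0 / (alpha + j.+1)%:R.
  by rewrite -E mulfK.
rewrite -addnS C1E exprS.
by field; rewrite Hf ?nat1r -?natrD ?pnatr_eq0 addnS.
Qed.

Lemma poch_S a j : poch a j.+1 = poch a j * (a + j%:R).
Proof. by rewrite /poch big_ord_recr. Qed.

Lemma poch_neq0 j : poch (alpha%:R + 1) j != 0.
Proof.
apply/prodf_neq0 => i _.
by rewrite natr1 -natrD pnatr_eq0 addSn.
Qed.

Definition ee (n j : nat) : algC :=
  ((alpha + n)`!)%:R / ((alpha`!)%:R * (n`!)%:R) *
  (poch (- n%:R) j / (poch (alpha%:R + 1) j * (j`!)%:R)).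

Lemma ee_rec n j :
  ee n j.+1 * ((alpha + j.+1) * j.+1)%:R = ee n j * (j%:R - n%:R).
Proof.
rewrite /ee !poch_S factS.
have H1 := poch_neq0 j. have H2 := fact_neq0 j.
have H3 := fact_neq0 alpha. have H4 := fact_neq0 n.
have H5 : (alpha%:R + 1 + j%:R) != 0 :> algC by rewrite natr1 -natrD pnatr_eq0 addSn.
rewrite !natrM.
have -> : (alpha + j.+1)%:R = (alpha%:R + 1 + j%:R) :> algC by rewrite natr1 -natrD addSn addnS.
field. by rewrite ?H1 ?H2 ?H3 ?H4 ?H5 ?nat1r ?pnatr_eq0.
Qed.

Lemma ee0 n : ee n 0 = cc n 0.
Proof.
rewrite /ee /cc /poch !big_ord0 expr0 fact0 addn0 mul1r.
have := bin_fact (leq_addr n alpha); rewrite addKn => H.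
rewrite -H !natrM.
have H3 := fact_neq0 alpha. have H4 := fact_neq0 n.
by field; rewrite H3 H4.
Qed.

Lemma ee_cc n j : ee n j = cc n j.
Proof.
elim: j => [|j IH]; first exact: ee0.
apply: (mulIf (x := ((alpha + j.+1) * j.+1)%:R)); first by rewrite pnatr_eq0 muln_eq0 negb_or addnS.
by rewrite ee_rec cc_rec IH.
Qed.

Lemma coef_lag n j : (laguerre alpha n)`_j = cc n j.
Proof.
rewrite /laguerre.
have -> : \sum_(j < n.+1) (poch (- n%:R) j / (poch (alpha%:R + 1) j * (j`!)%:R)) *: 'X^j
   = \poly_(j < n.+1) (poch (- n%:R) j / (poch (alpha%:R + 1) j * (j`!)%:R)) by rewrite poly_def.
rewrite coefZ coef_poly; case: ifP => hj.
  exact: ee_cc.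
rewrite /cc bin_small ?mulr0 ?mul0r //.
by rewrite ltn_add2l ltnNge -ltnS hj.
Qed.

Lemma lag_deriv_rec n :
  (laguerre alpha n.+1)^`() = (laguerre alpha n)^`() - laguerre alpha n.
Proof.
apply/polyP => j; rewrite coefB !coef_deriv !coef_lag /cc !addnS binS natrD factS natrM exprS.
have H2 := fact_neq0 j.
have Hj : (j.+1)%:R != 0 :> algC by rewrite pnatr_eq0.
by field; rewrite H2 nat1r.
Qed.

Lemma lag_ode n :
  lag_op (laguerre alpha n) =
  - ((alpha + 1)%:R *: (laguerre alpha n)^`()) - n%:R *: laguerre alpha n.
Proof.
apply/polyP => i; rewrite /lag_op derivnS derivn1 !coefB !coefXM coefN (coefZ n%:R) (coefZ (alpha + 1)%:R).
rewrite !coef_deriv !coef_lag.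
case: i => [|k]; rewrite ?coef_lag /=.
  have E := cc_rec n 0.
  rewrite subrr.
  apply/eqP; rewrite eq_sym -subr_eq0; apply/eqP.
  transitivity (- (cc n 1 * ((alpha + 1) * 1)%:R - cc n 0 * (0%:R - n%:R))); last by rewrite E subrr oppr0.
  move: (cc n 1) (cc n 0) => a b. ring.
have E := cc_rec n k.+1.
apply/eqP; rewrite -subr_eq0; apply/eqP.
transitivity (cc n k.+2 * ((alpha + k.+2) * k.+2)%:R - cc n k.+1 * (k.+1%:R - n%:R)); last by rewrite E subrr.
move: (cc n k.+2) (cc n k.+1) => a b. ring.
Qed.
Lemma lag_sum n : \sum_(t < n) laguerre alpha t = - (laguerre alpha n)^`().
Proof.
elim: n => [|n IH].
  rewrite big_ord0; apply/polyP => j.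
  rewrite coef0 coefN coef_deriv coef_lag /cc addn0 bin_small ?mulr0 ?mul0r ?mul0rn ?oppr0 //.
  by rewrite addnS ltnS leq_addr.
by rewrite big_ord_recr /= IH lag_deriv_rec opprB addrC.
Qed.
End L.

Definition op := {poly algC} -> {poly algC}.

Lemma inD_lin A : inD A -> forall (a : algC) p q, A (a *: p + q) = a *: A p + A q.
Proof.
elim => {A}.
- by move=> c a p q; rewrite scalerDr !scalerA mulrC.
- by move=> a p q; rewrite /dx_op derivD derivZ.
- move=> a p q; rewrite /lag_op derivnD derivnZ derivD derivZ !mulrDr -!scalerAr.
  by rewrite scalerBr opprD addrACA.
- by move=> A B _ IHA _ IHB a p q; rewrite IHA IHB scalerDr addrACA.
- by move=> c A _ IH a p q; rewrite IH scalerDr !scalerA mulrC.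
- by move=> A B _ IHA _ IHB a p q; rewrite IHB IHA.
Qed.
Arguments inD_lin {A}.

Lemma inD0 A : inD A -> A 0 = 0.
Proof.
move=> HA; have H := inD_lin HA 1 0 0.
rewrite scaler0 addr0 scale1r in H.
by apply: (addIr (A 0)); rewrite add0r -H.
Qed.
Arguments inD0 {A}.

Lemma inDZ A : inD A -> forall a p, A (a *: p) = a *: A p.
Proof. by move=> HA a p; have := inD_lin HA a p 0; rewrite addr0 (inD0 HA) addr0 => ->. Qed.
Arguments inDZ {A}.

Lemma inDD A : inD A -> forall p q, A (p + q) = A p + A q.
Proof. by move=> HA p q; have := inD_lin HA 1 p q; rewrite !scale1r => ->. Qed.
Arguments inDD {A}.

Lemma inD_sum A : inD A -> forall m (F : nat -> {poly algC}),
  A (\sum_(i < m) F i) = \sum_(i < m) A (F i).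
Proof.
move=> HA; elim => [|m IH] F; first by rewrite !big_ord0 inD0.
by rewrite !big_ord_recr /= inDD // IH.
Qed.
Arguments inD_sum {A}.

Fixpoint hop (s : seq algC) (T : op) (p : {poly algC}) : {poly algC} :=
  match s with
  | [::] => 0 *: p
  | a :: s' => a *: p + T (hop s' T p)
  end.

Lemma inD_hop s {T} : inD T -> inD (hop s T).
Proof.
move=> HT; elim: s => [|a s IH]; first exact: (inD_scal 0).
exact: (inD_add (inD_scal a) (inD_comp HT IH)).
Qed.

Lemma hop_eig s T v (l : algC) : inD T -> T v = l *: v ->
  hop s T v = (Poly s).[l] *: v.
Proof.
move=> HT Tv; elim: s => [|a s IH]; first by rewrite (_ : Poly [::] = 0) // horner0.
rewrite [hop _ _ _]/= IH (inDZ HT) Tv -[Poly (a :: s)]/(cons_poly a (Poly s)).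
by rewrite horner_cons scalerA scalerDl addrC.
Qed.
Arguments hop_eig s {T v l}.


Definition Nop (alpha : nat) : op :=
  fun p => (-1) *: (lag_op p + (alpha + 1)%:R *: dx_op p).

Lemma inD_Nop alpha : inD (Nop alpha).
Proof. exact: (inD_scale (-1) (inD_add inD_lag (inD_scale _ inD_dx))). Qed.

Lemma Nop_eig alpha n : Nop alpha (laguerre alpha n) = n%:R *: laguerre alpha n.
Proof.
rewrite /Nop lag_ode /dx_op.
by rewrite addrAC addNr add0r scaleN1r opprK.
Qed.

Definition T1 (alpha : nat) : op := fun p => Nop alpha p + 1 *: p.

Lemma inD_T1 alpha : inD (T1 alpha).
Proof. exact: (inD_add (inD_Nop alpha) (inD_scal 1)). Qed.

Lemma T1_eig alpha n : T1 alpha (laguerre alpha n) = (n.+1)%:R *: laguerre alpha n.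
Proof. by rewrite /T1 Nop_eig -scalerDl -natr1. Qed.

Lemma hopN alpha (r : {poly algC}) n :
  hop r (Nop alpha) (laguerre alpha n) = r.[n%:R] *: laguerre alpha n.
Proof. by rewrite (hop_eig _ (inD_Nop alpha) (Nop_eig alpha n)) polyseqK. Qed.

Lemma hopT alpha (r : {poly algC}) n :
  hop r (T1 alpha) (laguerre alpha n) = r.[n.+1%:R] *: laguerre alpha n.
Proof. by rewrite (hop_eig _ (inD_T1 alpha) (T1_eig alpha n)) polyseqK. Qed.

Theorem lemma4p4 (alpha : nat) (halpha : (0 < alpha)%N)
    (r0 r1 r2 : {poly algC}) :
  exists B : {poly algC} -> {poly algC},
    inD B /\
    forall n : nat,
      r0.[n%:R] *:
        dint (-1) n%:Z
          (fun s : int => r1.[s%:~R] *: laguerreZ alpha s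
                          + r2.[s%:~R] *: laguerreZ alpha (s - 1))
      = B (laguerre alpha n).
Proof.
pose H0 := hop r0 (Nop alpha).
pose H1 := hop r1 (Nop alpha).
pose H2 := hop r2 (T1 alpha).
pose A1 := fun p : {poly algC} => 1 *: p + (-1) *: dx_op p.
pose A2 := fun p : {poly algC} => (-1) *: dx_op p.
have iH0 : inD H0 by exact: inD_hop (inD_Nop alpha).
have iH1 : inD H1 by exact: inD_hop (inD_Nop alpha).
have iH2 : inD H2 by exact: inD_hop (inD_T1 alpha).
have iA1 : inD A1 by exact: (inD_add (inD_scal 1) (inD_scale (-1) inD_dx)).
have iA2 : inD A2 by exact: (inD_scale (-1) inD_dx).
exists (fun p => H1 (A1 (H0 p)) + H2 (A2 (H0 p))); split.
  exact: (inD_add (inD_comp iH1 (inD_comp iA1 iH0)) (inD_comp iH2 (inD_comp iA2 iH0))).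
move=> n.
rewrite /H0 hopN (inDZ iA1) (inDZ iA2) (inDZ iH1) (inDZ iH2) -scalerDr; congr (_ *: _).
have -> : A1 (laguerre alpha n) = \sum_(t < n.+1) laguerre alpha t.
  by rewrite big_ord_recr /= lag_sum /A1 /dx_op scale1r scaleN1r addrC.
have -> : A2 (laguerre alpha n) = \sum_(t < n) laguerre alpha t.
  by rewrite lag_sum /A2 /dx_op scaleN1r.
rewrite (inD_sum iH1) (inD_sum iH2).
rewrite /dint.
have -> : ((-1 : int) < n%:Z) = true by [].
have -> : `|(n%:Z - -1)%R|%N = n.+1 by lia.
rewrite big_split; congr (_ + _).
  apply: eq_bigr => k _.
  rewrite (_ : -1 + (k.+1)%:Z = k%:Z); last by lia.
  by rewrite /H1 hopN.
rewrite big_ord_recl.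
rewrite (_ : laguerreZ alpha (-1 + Posz (@nat_of_ord n.+1 ord0).+1 - 1) = 0) // scaler0 -[LHS]/(0 + _) add0r.
apply: eq_bigr => i _.
rewrite (_ : nat_of_ord (lift ord0 i) = i.+1) //.
rewrite (_ : -1 + (i.+2)%:Z - 1 = i%:Z); last by lia.
rewrite (_ : -1 + (i.+2)%:Z = (i.+1)%:Z); last by lia.
by rewrite /H2 hopT.
Qed.
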